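(* Let $n\ge1$ be an integer and let $k\in\mathbb{R}\setminus B_n$. Then there is a unique pair $(a,b)\in\mathbb{R}^2$ with $(a,b)\neq(0,0)$ satisfying both $S^{(a,b)}_{k,n+1}-S^{(a,b)}_{k,n}=bk-2b+a$ and $4a^3+27b^2=0$; namely $a=-\frac{27(F_n(k)-1)^2}{4(G_n(k)-k+2)^2}$, $b=\frac{27(F_n(k)-1)^3}{4(G_n(k)-k+2)^3}$.
   Context: For real $k,a,b$, the generalized $k$-FL sequence is $S^{(a,b)}_{k,0}=2b$, $S^{(a,b)}_{k,1}=bk+a$, $S^{(a,b)}_{k,m}=kS^{(a,b)}_{k,m-1}+S^{(a,b)}_{k,m-2}$ ($m\ge2$). Define $f_m,g_m\in\mathbb{Z}[T]$ by $f_0=0,f_1=1,g_0=2,g_1=T$, $f_m=Tf_{m-1}+f_{m-2}$, $g_m=Tg_{m-1}+g_{m-2}$, and set $F_n=f_{n+1}-f_n$, $G_n=g_{n+1}-g_n$, so that $S^{(a,b)}_{k,n+1}-S^{(a,b)}_{k,n}=F_n(k)a+G_n(k)b$. Let $B_n=\{k\in\mathbb{R}: F_n(k)-1=0 \text{ or } G_n(k)-k+2=0\}$. *)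

(* Defs.v *)
From HB Require Import structures.
From mathcomp Require Import all_boot all_order all_algebra.
From mathcomp Require Import reals.
Set Implicit Arguments. Unset Strict Implicit. Unset Printing Implicit Defensive.
Import Order.TTheory GRing.Theory Num.Theory.
Local Open Scope ring_scope.

Fixpoint fpoly (m : nat) : {poly int} :=
  match m with
  | 0%N => 0
  | 1%N => 1
  | (m'.+1 as m1).+1 => 'X * fpoly m1 + fpoly m'
  end.

Fixpoint gpoly (m : nat) : {poly int} :=
  match m with
  | 0%N => 2%:P
  | 1%N => 'X
  | (m'.+1 as m1).+1 => 'X * gpoly m1 + gpoly m'
  end.

Definition Fpoly (n : nat) : {poly int} := fpoly n.+1 - fpoly n.
Definition Gpoly (n : nat) : {poly int} := gpoly n.+1 - gpoly n.

Definition evalZ (R : realType) (p : {poly int}) (k : R) : R :=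
  (map_poly (fun z : int => z%:~R) p).[k].

Fixpoint Sseq (R : realType) (k a b : R) (m : nat) : R :=
  match m with
  | 0%N => 2 * b
  | 1%N => b * k + a
  | (m'.+1 as m1).+1 => k * Sseq k a b m1 + Sseq k a b m'
  end.

Definition Bset (R : realType) (n : nat) (k : R) : Prop :=
  evalZ (Fpoly n) k - 1 = 0 \/ evalZ (Gpoly n) k - k + 2 = 0.

(* Main.v *)
Require Import Defs.
From HB Require Import structures.
From mathcomp Require Import all_boot all_order all_algebra.
From mathcomp Require Import reals.
From mathcomp Require Import ring lra.
Import Order.TTheory GRing.Theory Num.Theory.
Local Open Scope ring_scope.

Lemma evalZ_step (R : realType) (k : R) (p q : {poly int}) :
  evalZ ('X * p + q) k = k * evalZ p k + evalZ q k.
Proof.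
by rewrite /evalZ rmorphD rmorphM /= map_polyX hornerD hornerM hornerX.
Qed.

Lemma evalZ_sub (R : realType) (k : R) (p q : {poly int}) :
  evalZ (p - q) k = evalZ p k - evalZ q k.
Proof. by rewrite /evalZ rmorphB /= hornerD hornerN. Qed.

Lemma Sseq_lin (R : realType) (k a b : R) m :
  Sseq k a b m = evalZ (fpoly m) k * a + evalZ (gpoly m) k * b /\
  Sseq k a b m.+1 = evalZ (fpoly m.+1) k * a + evalZ (gpoly m.+1) k * b.
Proof.
elim: m => [|m [IH1 IH2]].
  split.
    by rewrite /= /evalZ map_poly0 map_polyC /= hornerC horner0; ring.
  by rewrite /= /evalZ map_polyC map_polyX hornerX hornerC /=; ring.
split; first by [].
have -> : Sseq k a b m.+2 = k * Sseq k a b m.+1 + Sseq k a b m by [].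
have -> : fpoly m.+2 = 'X * fpoly m.+1 + fpoly m by [].
have -> : gpoly m.+2 = 'X * gpoly m.+1 + gpoly m by [].
rewrite !evalZ_step IH1 IH2; ring.
Qed.

Theorem lemma3p6 (R : realType) (n : nat) (k : R) :
  (1 <= n)%N -> ~ Bset n k ->
  let P := fun (a b : R) =>
    (a, b) <> (0, 0) /\
    Sseq k a b n.+1 - Sseq k a b n = b * k - 2 * b + a /\
    4 * a ^+ 3 + 27 * b ^+ 2 = 0 in
  let x := evalZ (Fpoly n) k - 1 in
  let y := evalZ (Gpoly n) k - k + 2 in
  (exists! ab : R * R, P ab.1 ab.2) /\
  P (- (27 * x ^+ 2) / (4 * y ^+ 2)) ((27 * x ^+ 3) / (4 * y ^+ 3)).
Proof.
move=> _ nB P x y.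
have [x0 y0] : x != 0 /\ y != 0.
  by split; apply/eqP => h; apply: nB; [left|right].
have key : forall a b : R,
    (Sseq k a b n.+1 - Sseq k a b n = b * k - 2 * b + a) <-> x * a + y * b = 0.
  move=> a b; have [h1 h2] := Sseq_lin R k a b n.
  have E : Sseq k a b n.+1 - Sseq k a b n - (b * k - 2 * b + a) = x * a + y * b.
    rewrite h1 h2 /x /y /Fpoly /Gpoly !evalZ_sub; ring.
  split => h.
    by rewrite -E h subrr.
  by apply/eqP; rewrite -subr_eq0 E h.
have HP : P (- (27 * x ^+ 2) / (4 * y ^+ 2)) ((27 * x ^+ 3) / (4 * y ^+ 3)).
  split; [|split].
  - case=> h _; apply: (negP x0).
    have : x ^+ 2 = 0.
      rewrite (_ : x ^+ 2 = - (- (27 * x ^+ 2) / (4 * y ^+ 2)) * (4 * y ^+ 2) / 27).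
        by rewrite h; ring.
      by field; rewrite y0.
    by move/eqP; rewrite sqrf_eq0.
  - by apply/key; field; rewrite y0.
  - by field; rewrite y0.
split=> //.
exists (- (27 * x ^+ 2) / (4 * y ^+ 2), (27 * x ^+ 3) / (4 * y ^+ 3)); split=> //.
case=> a b /= [nz [/key e c]].
have hb : b = - (x * a) / y.
  rewrite -[b](mulfK y0) (_ : b * y = - (x * a)) //.
  by apply/eqP; rewrite -subr_eq0 opprK mulrC addrC e.
have a0 : a != 0.
  by apply/eqP => a0; apply: nz; rewrite hb a0 mulr0 oppr0 mul0r.
have e2 : a ^+ 2 * (4 * a * y ^+ 2 + 27 * x ^+ 2) = 0.
  have h0 : (4 * a ^+ 3 + 27 * b ^+ 2) * y ^+ 2 = 0 by rewrite c mul0r.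
  rewrite -h0 hb; field; by rewrite y0.
move/eqP: e2; rewrite mulf_eq0 expf_eq0 (negbTE a0) /= => /eqP e3.
have ha : a = - (27 * x ^+ 2) / (4 * y ^+ 2).
  have -> : - (27 * x ^+ 2) = a * (4 * y ^+ 2) by rewrite -[LHS]add0r -e3; ring.
  by field; rewrite y0.
rewrite hb ha; congr pair; field; by rewrite y0.
Qed.
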